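(* In the setting described in the context (with $L=[0,1]$), let $q\in\{1,\dots,n\}$ and assume there exists $A\subseteq\mathcal C$ with $|A|=q$ and $\eta_q(A)=1$. Then $$\min_{\mu\ q\text{-maxitive capacity}}\ \max_{1\le k\le N}|S_\mu(x^{(k)})-\alpha^{(k)}|=\Delta_q,$$ where the minimum is over all $q$-maxitive capacities $\mu:2^{\mathcal C}\to[0,1]$ (and is attained).
   Context: Let $\mathcal C=\{1,\dots,n\}$ and $L=[0,1]$. A capacity is a map $\mu:2^{\mathcal C}\to[0,1]$ with $\mu(\emptyset)=0$, $\mu(\mathcal C)=1$, monotone for inclusion; it is $q$-maxitive if for all $X$ with $|X|>q$, $\mu(X)=\max_{Y\subsetneq X,\ |Y|\le q}\mu(Y)$. Sugeno integral: $S_\mu(x)=\max_{A\subseteq\mathcal C}\min(\min_{i\in A}x_i,\mu(A))$ with $\min_{i\in\emptyset}x_i=1$. Training data: $N$ pairs $(x^{(k)},\alpha^{(k)})$, $x^{(k)}\in[0,1]^n$, $\alpha^{(k)}\in[0,1]$. For nonempty $A$, $m_{k,A}=\min_{i\in A}x^{(k)}_i$. Write $t^+=\max(t,0)$. For $1\le i\le N$ and $0<|A|\le q$, let $\sigma_G(\alpha^{(i)},m_{l,A},\alpha^{(l)})=\min\big(\tfrac{(\alpha^{(i)}-\alpha^{(l)})^+}{2},(m_{l,A}-\alpha^{(l)})^+\big)$, $\delta_{i,A}=\max\big((\alpha^{(i)}-m_{i,A})^+,\max_{1\le l\le N}\sigma_G(\alpha^{(i)},m_{l,A},\alpha^{(l)})\big)$,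 $\delta_i=\min_{0<|A|\le q}\delta_{i,A}$, and $\Delta_q=\max_{1\le i\le N}\delta_i$. For $0<|A|\le q$, $\eta_q(A)=\min_{1\le k\le N}\big(m_{k,A}\to_G\min(\alpha^{(k)}+\Delta_q,1)\big)$, where $a\to_G b=1$ if $a\le b$ and $a\to_G b=b$ otherwise. *)

(* Defs.v *)
From HB Require Import structures.
From mathcomp Require Import all_boot all_order all_algebra.
Set Implicit Arguments. Unset Strict Implicit. Unset Printing Implicit Defensive.
Import Order.TTheory GRing.Theory Num.Theory.
Local Open Scope ring_scope.

Section Sugeno.
Variables (R : realFieldType) (n : nat).

(* a capacity on the criteria C = 'I_n (i.e. {0,..,n-1} standing for {1,..,n}) *)
Definition capacity (mu : {set 'I_n} -> R) : Prop :=
  [/\ mu set0 = 0, mu setT = 1,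
      (forall X, 0 <= mu X <= 1) &
      (forall X Y : {set 'I_n}, X \subset Y -> mu X <= mu Y)].

(* maximum over the (nonempty, containing set0) family of proper subsets of size <= q;
   the neutral element 0 is harmless since capacities are nonnegative *)
Definition q_maxitive (q : nat) (mu : {set 'I_n} -> R) : Prop :=
  capacity mu /\
  forall X : {set 'I_n}, (q < #|X|)%N ->
    mu X = \big[Num.max/0]_(Y : {set 'I_n} | (Y \proper X) && (#|Y| <= q)%N) mu Y.

Definition minA (x : 'I_n -> R) (A : {set 'I_n}) : R := \big[Num.min/1]_(i in A) x i.

Definition sugeno (mu : {set 'I_n} -> R) (x : 'I_n -> R) : R :=
  \big[Num.max/0]_(A : {set 'I_n}) Num.min (minA x A) (mu A).

Definition posp (t : R) : R := Num.max t 0.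

Definition sigmaG (ai mlA al : R) : R := Num.min (posp (ai - al) / 2) (posp (mlA - al)).

Definition impG (a b : R) : R := if a <= b then 1 else b.

Variables (N : nat) (x : 'I_N -> 'I_n -> R) (alpha : 'I_N -> R) (q : nat).

Definition mkA (k : 'I_N) (A : {set 'I_n}) : R := minA (x k) A.

Definition delta_iA (i : 'I_N) (A : {set 'I_n}) : R :=
  Num.max (posp (alpha i - mkA i A))
          (\big[Num.max/0]_(l : 'I_N) sigmaG (alpha i) (mkA l A) (alpha l)).

(* min over 0 < |A| <= q; all values lie in [0,1] so the neutral element 1 is harmless *)
Definition delta_i (i : 'I_N) : R :=
  \big[Num.min/1]_(A : {set 'I_n} | (0 < #|A| <= q)%N) delta_iA i A.

(* max over i (values are nonnegative and N >= 1) *)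
Definition Delta_q : R := \big[Num.max/0]_(i : 'I_N) delta_i i.

(* eta_q(A) for 0 < |A| <= q; values are <= 1 and N >= 1 *)
Definition eta_q (A : {set 'I_n}) : R :=
  \big[Num.min/1]_(k : 'I_N) impG (mkA k A) (Num.min (alpha k + Delta_q) 1).

Definition sup_error (mu : {set 'I_n} -> R) : R :=
  \big[Num.max/0]_(k : 'I_N) `|sugeno mu (x k) - alpha k|.

End Sugeno.

(* Main.v *)
Require Import Defs.
From mathcomp Require Import all_boot all_order all_algebra.
From mathcomp Require Import lra.
Import Order.TTheory GRing.Theory Num.Theory.
Local Open Scope ring_scope.

Section S.
Variables (R : realFieldType) (n N : nat)
    (x : 'I_N -> 'I_n -> R) (alpha : 'I_N -> R) (q : nat)
    (hq1 : (1 <= q)%N) (hqn : (q <= n)%N)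
    (hx : forall k i, 0 <= x k i <= 1) (halpha : forall k, 0 <= alpha k <= 1).

Local Notation mA k A := (Defs.minA (x k) A).

Lemma minA_ge0 k (A : {set 'I_n}) : 0 <= mA k A.
Proof. by apply: le_bigmin => // i _; case/andP: (hx k i). Qed.

Lemma minA_le1 (f : 'I_n -> R) (A : {set 'I_n}) : Defs.minA f A <= 1.
Proof. exact: bigmin_le_id. Qed.

Lemma minA_anti (f : 'I_n -> R) (A B : {set 'I_n}) :
  A \subset B -> Defs.minA f B <= Defs.minA f A.
Proof.
move=> AB; apply/bigmin_geP; split; first exact: minA_le1.
move=> i iA; apply: bigmin_le_cond; exact: (subsetP AB).
Qed.

Lemma exB : exists B : {set 'I_n}, (0 < #|B| <= q)%N.
Proof.
have n0 : (0 < n)%N by apply: leq_trans hqn.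
by exists [set Ordinal n0]; rewrite cards1.
Qed.

Lemma sug_ge mu k (A : {set 'I_n}) :
  Num.min (mA k A) (mu A) <= sugeno mu (x k).
Proof. exact: (le_bigmax 0 (fun A => Num.min (mA k A) (mu A))). Qed.

Lemma lb_set mu : q_maxitive q mu -> forall k (c : R), 0 < c -> c <= sugeno mu (x k) ->
  exists B : {set 'I_n}, (0 < #|B| <= q)%N /\ c <= Num.min (mA k B) (mu B).
Proof.
case=> [[m0 m1 mb mm] hmax] k c c0 cS.
case E: [exists B : {set 'I_n}, (0 < #|B| <= q)%N && (c <= Num.min (mA k B) (mu B))].
  by case/existsP: E => B /andP[h1 h2]; exists B.
exfalso; move/existsPn: E => H.
have H' : forall B : {set 'I_n}, (0 < #|B| <= q)%N -> Num.min (mA k B) (mu B) < c.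
  by move=> B hB; move: (H B); rewrite hB /= -ltNge.
suff : sugeno mu (x k) < c by rewrite ltNge cS.
apply: bigmax_lt => // A _.
case: (boolP (A == set0)) => [/eqP -> | An0].
  by rewrite m0 gt_min c0 orbT.
case: (leqP #|A| q) => hAq.
  by apply: H'; rewrite hAq card_gt0 An0.
rewrite (hmax A hAq) gt_min.
apply/orP; case: (boolP (mA k A < c)) => [h|]; first by left. rewrite -leNgt => cm; right.
apply: bigmax_lt => // Y /andP[YA Yq].
case: (boolP (Y == set0)) => [/eqP -> | Yn0]; first by rewrite m0.
have := H' Y; rewrite Yq card_gt0 Yn0 => /(_ isT).
have := @minA_anti (x k) Y A (proper_sub YA).
rewrite gt_min => h1 /orP [h2|//]; exfalso.
move: h2; rewrite ltNge => /negP; apply; apply: le_trans cm h1.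
Qed.

Lemma lower mu : q_maxitive q mu -> Delta_q x alpha q <= sup_error x alpha mu.
Proof.
move=> hmu.
have hmu' := hmu; case: hmu' => [[m0 m1 mb mm] hmax].
set e := sup_error x alpha mu.
have e0 : 0 <= e by apply: bigmax_ge_id.
have herr : forall k, alpha k - e <= sugeno mu (x k) <= alpha k + e.
  move=> k; have := le_bigmax 0 (fun k => `|sugeno mu (x k) - alpha k|) k.
  rewrite -/(sup_error x alpha mu) -/e ler_norml => /andP[h1 h2].
  apply/andP; split; lra.
apply: bigmax_le => // i _.
have [B [hB hc]] : exists B : {set 'I_n}, (0 < #|B| <= q)%N /\
    alpha i - e <= Num.min (mA i B) (mu B).
  case: (ltP 0 (alpha i - e)) => hc.
    by apply: lb_set => //; case/andP: (herr i).
  case: exB => B hB; exists B; split => //.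
  apply: le_trans hc _; rewrite le_min minA_ge0 /=; by case/andP: (mb B).
rewrite /delta_i; apply: (bigmin_inf B (fun A : {set 'I_n} => (0 < #|A| <= q)%N) _ _ hB).
rewrite /delta_iA ge_max; apply/andP; split.
  rewrite /posp ge_max e0 andbT; move: hc; rewrite le_min /mkA => /andP[h _]; lra.
apply: bigmax_le => // l _.
have hl := le_trans (sug_ge mu l B) (proj2 (andP (herr l))).
move: hc; rewrite le_min => /andP[hc1 hc2].
rewrite /sigmaG /mkA.
case: (leP (mA l B) (alpha l + e)) => h.
  by rewrite ge_min; apply/orP; right; rewrite /posp ge_max e0 andbT; lra.
have hmuB : mu B <= alpha l + e.
  by move: hl; rewrite ge_min => /orP[h'|//]; lra.
rewrite ge_min; apply/orP; left.
have : posp (alpha i - alpha l) <= e * 2.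
  by rewrite /posp ge_max; apply/andP; split; lra.
move: (posp _) => u; lra.
Qed.


Lemma posp_ge (t : R) : t <= posp t.
Proof. by rewrite /posp le_max lexx. Qed.
Local Notation D := (Delta_q x alpha q).
Local Notation eta := (eta_q x alpha q).

Lemma D0 : 0 <= D.
Proof. exact: bigmax_ge_id. Qed.

Lemma eta_ge0 A : 0 <= eta A.
Proof.
apply: le_bigmin => // k _; rewrite /impG; case: ifP => // _.
rewrite le_min ler01 andbT; have := D0; case/andP: (halpha k) => ? ?; lra.
Qed.

Lemma eta_le1 A : eta A <= 1.
Proof. exact: bigmin_le_id. Qed.

Lemma eta_mono (A B : {set 'I_n}) : A \subset B -> eta A <= eta B.
Proof.
move=> AB; apply: le_bigmin2 => k _; rewrite /impG /mkA.
have h := @minA_anti (x k) A B AB.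
case: ifP => h1; first by rewrite (le_trans h h1).
case: ifP => // _; rewrite ge_min; apply/orP; right; exact: lexx.
Qed.

Definition mu0 (X : {set 'I_n}) : R := if X == set0 then 0 else eta X.
Definition muS (X : {set 'I_n}) : R :=
  if (#|X| <= q)%N then mu0 X
  else \big[Num.max/0]_(Y : {set 'I_n} | (Y \proper X) && (#|Y| <= q)%N) mu0 Y.

Lemma mu0_b X : 0 <= mu0 X <= 1.
Proof. rewrite /mu0; case: ifP => _; first by rewrite lexx ler01. by rewrite eta_ge0 eta_le1. Qed.

Lemma muS_b X : 0 <= muS X <= 1.
Proof.
rewrite /muS; case: ifP => _; first exact: mu0_b.
rewrite bigmax_ge_id /=; apply: bigmax_le; first exact: ler01.
by move=> Y _; case/andP: (mu0_b Y).
Qed.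

Lemma mu0_mono (X Y : {set 'I_n}) : X \subset Y -> mu0 X <= mu0 Y.
Proof.
move=> XY; rewrite /mu0; case: ifP => hX; first by case/andP: (mu0_b Y); rewrite /mu0.
case: ifP => hY; last exact: eta_mono.
by move: XY; rewrite (eqP hY) subset0 hX.
Qed.

Lemma muS_mono (X Y : {set 'I_n}) : X \subset Y -> muS X <= muS Y.
Proof.
move=> XY; rewrite /muS.
have cXY := subset_leq_card XY.
case: (leqP #|X| q) => hX; case: (leqP #|Y| q) => hY.
- exact: mu0_mono.
- apply: le_bigmax_cond; rewrite hX andbT properEcard XY /=.
  exact: leq_ltn_trans hX hY.
- by move: (leq_trans cXY hY); rewrite leqNgt hX.
- apply: (@subset_bigmax_cond _ _ _ _ predT predT) => //.
  apply/subsetP => Z; rewrite !inE /= => /andP[ZX ->]; rewrite andbT.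
  exact: proper_sub_trans ZX XY.
Qed.

Lemma muS_qmax (A : {set 'I_n}) : #|A| = q -> eta A = 1 -> q_maxitive q muS.
Proof.
move=> hA eA.
have An0 : A != set0 by rewrite -card_gt0 hA.
split; last first.
  move=> X hX; rewrite /muS leqNgt hX /=.
  by apply: eq_bigr => Y /andP[_ ->].
split.
- by rewrite /muS cards0 /mu0 eqxx.
- apply/eqP; rewrite eq_le; case/andP: (muS_b setT) => _ -> /=.
  rewrite /muS cardsT card_ord.
  case: (leqP n q) => hn.
    rewrite /mu0; case: ifP => h.
      by move: An0; rewrite -subset0 -(eqP h) subsetT.
    by rewrite -eA; apply: eta_mono; rewrite subsetT.
  apply: (bigmax_sup A (fun Y : {set 'I_n} => (Y \proper [set: 'I_n]) && (#|Y| <= q)%N) _ mu0).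
    rewrite hA leqnn andbT properT; apply/negP => /eqP hT.
    by move: hn; rewrite -hA hT cardsT card_ord ltnn.
  by rewrite /mu0 (negbTE An0) eA.
- exact: muS_b.
- exact: muS_mono.
Qed.

Lemma mu0_up k (Y : {set 'I_n}) : Num.min (mA k Y) (mu0 Y) <= alpha k + D.
Proof.
have d0 := D0; have := halpha k; case/andP => a0 a1.
rewrite /mu0; case: ifP => _.
  by rewrite ge_min; apply/orP; right; lra.
have he : eta Y <= impG (mkA x k Y) (Num.min (alpha k + D) 1).
  by rewrite /eta_q; apply: (bigmin_inf k (fun _ => true)).
move: he; rewrite /impG /mkA; case: ifP => h he.
  by rewrite ge_min; apply/orP; left; move: h; rewrite le_min => /andP[].
by rewrite ge_min; apply/orP; right; move: he; rewrite le_min => /andP[].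
Qed.

Lemma muS_up k (A : {set 'I_n}) : Num.min (mA k A) (muS A) <= alpha k + D.
Proof.
have d0 := D0; have := halpha k; case/andP => a0 a1.
rewrite /muS; case: ifP => _; first exact: mu0_up.
rewrite ge_min; apply/orP; case: (leP (mA k A) (alpha k + D)) => h; [by left | right].
apply: bigmax_le; first lra.
move=> Y /andP[YA _].
have := mu0_up k Y; have := @minA_anti (x k) Y A (proper_sub YA).
rewrite ge_min => h1 /orP[h2|//]; lra.
Qed.

Lemma upper (A : {set 'I_n}) : #|A| = q -> eta A = 1 -> sup_error x alpha muS <= D.
Proof.
move=> hA eA.
have d0 := D0.
apply: bigmax_le => // k _.
have := halpha k; case/andP => a0 a1.
have Sup : sugeno muS (x k) <= alpha k + D.
  apply: bigmax_le; first lra.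
  move=> B _; exact: muS_up.
have S0 : 0 <= sugeno muS (x k) by apply: bigmax_ge_id.
rewrite ler_norml; apply/andP; split; last lra.
suff : alpha k - D <= sugeno muS (x k) by lra.
case: (leP 1 D) => hD1; first lra.
have hdk : delta_i x alpha q k <= D.
  exact: (le_bigmax 0 (fun i => delta_i x alpha q i) k).
case E: [exists B : {set 'I_n}, (0 < #|B| <= q)%N && (delta_iA x alpha k B <= D)]; last first.
  exfalso; move/existsPn: E => H.
  move: hdk; apply/negP; rewrite -ltNge; apply/bigmin_gtP; split => // B hB.
  by move: (H B); rewrite hB /= -ltNge.
case/existsP: E => B /andP[hB hd].
move: hd; rewrite /delta_iA ge_max => /andP[hd1 /bigmax_leP [_ hs]].
have hm : alpha k - D <= mA k B.
  by move: hd1; rewrite /posp ge_max /mkA => /andP[h _]; lra.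
have hBn : B != set0 by rewrite -card_gt0; case/andP: hB.
have hmuB : muS B = eta B.
  by rewrite /muS; case/andP: hB => _ ->; rewrite /mu0 (negbTE hBn).
apply: le_trans (sug_ge muS k B).
rewrite le_min hm hmuB /=.
apply: le_bigmin; first lra.
move=> l _; rewrite /impG; case: ifP => h; first lra.
have := halpha l; case/andP => b0 b1.
move: h => /negbT; rewrite -ltNge gt_min => hlt.
have hml : mA l B <= 1 := minA_le1 (x l) B.
have := hs l isT; rewrite /sigmaG /mkA ge_min => /orP[h|h].
  rewrite le_min; apply/andP; split; last lra.
  have : alpha k - alpha l <= D * 2.
    move: h; move: (posp_ge (alpha k - alpha l)) => hp; move: (posp (alpha k - alpha l)) hp => u hp hu.
    lra.
  lra.
move: h; rewrite /posp ge_max => /andP[h _].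
move: hlt; rewrite /mkA; clear hs hB hBn hd1 hdk hmuB; case/orP => ?; lra.
Qed.

End S.

Theorem theorem4 (R : realFieldType) (n N : nat)
    (x : 'I_N -> 'I_n -> R) (alpha : 'I_N -> R) (q : nat)
    (hN : (0 < N)%N) (hq1 : (1 <= q)%N) (hqn : (q <= n)%N)
    (hx : forall k i, 0 <= x k i <= 1) (halpha : forall k, 0 <= alpha k <= 1)
    (hA : exists A : {set 'I_n}, #|A| = q /\ eta_q x alpha q A = 1) :
  (exists mu : {set 'I_n} -> R,
      q_maxitive q mu /\ sup_error x alpha mu = Delta_q x alpha q) /\
  (forall mu : {set 'I_n} -> R,
      q_maxitive q mu -> Delta_q x alpha q <= sup_error x alpha mu).
Proof.
have low : forall mu : {set 'I_n} -> R, q_maxitive q mu -> Delta_q x alpha q <= sup_error x alpha mu.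
  by move=> mu hmu; apply: lower.
split => //.
case: hA => A [hA eA].
exists (@muS R n N x alpha q).
have hm : q_maxitive q (@muS R n N x alpha q) by apply: muS_qmax hA eA.
split => //.
apply/eqP; rewrite eq_le low // andbT.
by apply: upper hA eA.
Qed.
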